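(* Let $m$ be a positive integer and $k\ge0$. If $\|m\alpha\|\le\|q_k\alpha\|$, then $\mathrm{ab}_\alpha(m)\ge q_{k+1}$. If $\|m\alpha\|\ge\|q_k\alpha\|$, then $\mathrm{ab}_\alpha(m)<q_{k+1}+q_k$.
   Context: $\alpha\in(0,1)$ irrational, $\alpha=[0;a_1,a_2,\ldots]$ with positive integers $a_i$, $a_1\ge2$; $q_{-1}=0$, $q_0=1$, $q_1=a_1$, $q_k=a_kq_{k-1}+q_{k-2}$ ($k\ge2$). $\|x\|$ is the distance from $x$ to the nearest integer. Sturmian words of slope $\alpha$: with $R(\rho)=\{\rho+\alpha\}$ on $[0,1)$ and either $I_0=[0,1-\alpha)$ or $I_0=(0,1-\alpha]$ ($I_1$ its complement), $\mathbf{s}_{\rho,\alpha}$ has $n$-th letter $0$ iff $R^n(\rho)\in I_0$; they share a set $\mathcal{L}_\alpha$ of finite factors. An abelian power of period $m$ and exponent $e$ is a concatenation of $e$ pairwise abelian equivalent words (same numbers of $0$s and $1$s) of length $m$; $\mathrm{ab}_\alpha(m)$ is the maximum exponent of an abelian power of period $m$ in $\mathcal{L}_\alpha$ (it is known that $\mathrm{ab}_\alpha(m)=\lfloor 1/\|m\alpha\|\rfloor$). *)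

(* Defs.v *)
From Stdlib Require Import Reals Lra Lia ZArith Arith List.
Open Scope R_scope.

Definition frac (x : R) : R := x - IZR (Int_part x).

Definition dist_int (x : R) : R := Rmin (frac x) (1 - frac x).

Definition irrational (x : R) : Prop :=
  forall p q : Z, q <> 0%Z -> x <> IZR p / IZR q.

(* Continued fraction expansion alpha = [0; a_1, a_2, ...] via the Gauss map:
   cf_rem alpha 0 = alpha, cf_rem alpha (k+1) = {1 / cf_rem alpha k},
   a_(k+1) = floor (1 / cf_rem alpha k). *)
Fixpoint cf_rem (alpha : R) (k : nat) : R :=
  match k with
  | O => alpha
  | S k' => frac (1 / cf_rem alpha k')
  end.

Definition cf_a (alpha : R) (k : nat) : nat :=
  match k with
  | O => 0%nat
  | S k' => Z.to_nat (Int_part (1 / cf_rem alpha k'))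
  end.

(* cf_qpair alpha k = (q_(k-1), q_k), with q_(-1) = 0, q_0 = 1,
   q_k = a_k q_(k-1) + q_(k-2). *)
Fixpoint cf_qpair (alpha : R) (k : nat) : nat * nat :=
  match k with
  | O => (0%nat, 1%nat)
  | S k' => let (qm, q) := cf_qpair alpha k' in
            (q, (cf_a alpha (S k') * q + qm)%nat)
  end.

Definition cf_q (alpha : R) (k : nat) : nat := snd (cf_qpair alpha k).

(* Sturmian word s_{rho,alpha}; letters are bools (false = 0, true = 1).
   closed_left = true : I_0 = [0, 1 - alpha);  closed_left = false : I_0 = (0, 1 - alpha]. *)
Definition sturmian (alpha rho : R) (closed_left : bool) (n : nat) : bool :=
  let x := frac (rho + INR n * alpha) in
  if closed_left
  then negb (if Rlt_dec x (1 - alpha) then true else false)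
  else negb (if Rlt_dec 0 x then (if Rle_dec x (1 - alpha) then true else false)
             else false).

Definition factor_at (s : nat -> bool) (i len : nat) : list bool :=
  map (fun t => s (i + t)%nat) (seq 0 len).

Definition in_L (alpha : R) (w : list bool) : Prop :=
  exists (rho : R) (closed_left : bool) (i : nat),
    0 <= rho < 1 /\ w = factor_at (sturmian alpha rho closed_left) i (length w).

Definition count_ones (w : list bool) : nat := count_occ Bool.bool_dec w true.
Definition count_zeros (w : list bool) : nat := count_occ Bool.bool_dec w false.

Definition abelian_equiv (u v : list bool) : Prop :=
  count_zeros u = count_zeros v /\ count_ones u = count_ones v.

Definition abelian_power (m e : nat) (w : list bool) : Prop :=
  length w = (m * e)%nat /\
  forall j j' : nat, (j < e)%nat -> (j' < e)%nat ->
    abelian_equiv (firstn m (skipn (j * m) w)) (firstn m (skipn (j' * m) w)).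

(* ab_alpha(m) >= n : some abelian power of period m in L_alpha has exponent >= n *)
Definition ab_ge (alpha : R) (m n : nat) : Prop :=
  exists (w : list bool) (e : nat), in_L alpha w /\ abelian_power m e w /\ (n <= e)%nat.

(* ab_alpha(m) < n : every abelian power of period m in L_alpha has exponent < n *)
Definition ab_lt (alpha : R) (m n : nat) : Prop :=
  forall (w : list bool) (e : nat), in_L alpha w -> abelian_power m e w -> (e < n)%nat.

(* Main.v *)
Require Import Defs.
From Stdlib Require Import Reals Lra Lia ZArith Arith List.
Open Scope R_scope.

Lemma Int_part_unique (x : R) (z : Z) : IZR z <= x < IZR z + 1 -> Int_part x = z.
Proof.
  intros [H1 H2]. unfold Int_part.
  assert (up x = (z + 1)%Z).
  { symmetry; apply tech_up; rewrite plus_IZR; lra. }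
  lia.
Qed.

Lemma Int_part_bounds (x : R) : IZR (Int_part x) <= x < IZR (Int_part x) + 1.
Proof. destruct (base_Int_part x); lra. Qed.

Lemma frac_range (x : R) : 0 <= frac x < 1.
Proof. unfold frac; destruct (Int_part_bounds x); lra. Qed.

Lemma Int_part_add_int (z : Z) (t : R) : Int_part (IZR z + t) = (z + Int_part t)%Z.
Proof.
  apply Int_part_unique. rewrite plus_IZR. destruct (Int_part_bounds t); lra.
Qed.

Lemma dist_int_le (x : R) (c : Z) : dist_int x <= Rabs (x - IZR c).
Proof.
  unfold dist_int, frac. destruct (Int_part_bounds x) as [H1 H2].
  destruct (Z_le_gt_dec c (Int_part x)) as [Hc|Hc].
  - apply IZR_le in Hc. rewrite Rabs_right by lra.
    eapply Rle_trans. apply Rmin_l. lra.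
  - assert (Hc' : (Int_part x + 1 <= c)%Z) by lia. apply IZR_le in Hc'.
    rewrite plus_IZR in Hc'. rewrite Rabs_left1 by lra.
    eapply Rle_trans. apply Rmin_r. lra.
Qed.

Lemma dist_int_exact (c : Z) (t : R) : Rabs t <= /2 -> dist_int (IZR c + t) = Rabs t.
Proof.
  intros Ht. unfold dist_int, frac.
  destruct (Rle_or_lt 0 t) as [H|H].
  - rewrite Rabs_right in * by lra.
    rewrite (Int_part_unique _ c) by lra. replace (IZR c + t - IZR c) with t by ring.
    apply Rmin_left. lra.
  - rewrite Rabs_left in * by lra.
    rewrite (Int_part_unique _ (c - 1)) by (rewrite minus_IZR; lra). rewrite minus_IZR.
    replace (IZR c + t - (IZR c - 1)) with (t + 1) by ring.
    rewrite Rmin_right; lra.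
Qed.

Lemma dist_int_attained (x : R) : exists c : Z, Rabs (x - IZR c) = dist_int x.
Proof.
  unfold dist_int, frac. destruct (Int_part_bounds x) as [H1 H2].
  destruct (Rle_dec (x - IZR (Int_part x)) (1 - (x - IZR (Int_part x)))).
  - exists (Int_part x). rewrite Rmin_left by lra. rewrite Rabs_right; lra.
  - exists (Int_part x + 1)%Z. rewrite Rmin_right by lra. rewrite plus_IZR.
    rewrite Rabs_left1; lra.
Qed.

Fixpoint prodth (alpha : R) (k : nat) : R :=
  match k with O => 1 | S k' => prodth alpha k' * cf_rem alpha k' end.

Fixpoint cf_ppair (alpha : R) (k : nat) : nat * nat :=
  match k with
  | O => (1%nat, 0%nat)
  | S k' => let (pm, p) := cf_ppair alpha k' in (p, (cf_a alpha (S k') * p + pm)%nat)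
  end.

Lemma qpair_S alpha k : cf_qpair alpha (S k) =
  (snd (cf_qpair alpha k), (cf_a alpha (S k) * snd (cf_qpair alpha k) + fst (cf_qpair alpha k))%nat).
Proof. simpl. destruct (cf_qpair alpha k); reflexivity. Qed.

Lemma ppair_S alpha k : cf_ppair alpha (S k) =
  (snd (cf_ppair alpha k), (cf_a alpha (S k) * snd (cf_ppair alpha k) + fst (cf_ppair alpha k))%nat).
Proof. simpl. destruct (cf_ppair alpha k); reflexivity. Qed.

Lemma th_range alpha : 0 < alpha < 1 -> forall k, 0 <= cf_rem alpha k < 1.
Proof. intros H [|k]; simpl. lra. apply frac_range. Qed.

Lemma a_val alpha k : 0 < cf_rem alpha k < 1 ->
  INR (cf_a alpha (S k)) = 1 / cf_rem alpha k - cf_rem alpha (S k) /\ (1 <= cf_a alpha (S k))%nat.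
Proof.
  intros [H1 H2]. simpl cf_a. simpl cf_rem. unfold frac.
  set (y := 1 / cf_rem alpha k).
  assert (Hy : 1 < y).
  { unfold y. apply (Rmult_lt_reg_l (cf_rem alpha k)); auto.
    field_simplify; lra. }
  destruct (Int_part_bounds y) as [B1 B2].
  assert (Hz : (1 <= Int_part y)%Z).
  { apply le_IZR. assert (0 < IZR (Int_part y)) by lra.
    apply lt_IZR in H. apply IZR_le. lia. }
  split.
  - rewrite INR_IZR_INZ, Z2Nat.id by lia. ring.
  - lia.
Qed.

Section CF.
Variable alpha : R.
Hypothesis Ha : 0 < alpha < 1.

Lemma E_lemma k : (forall i, (i < k)%nat -> cf_rem alpha i <> 0) ->
  (1 <= snd (cf_qpair alpha k))%nat /\
  INR (fst (cf_qpair alpha k)) * alpha - INR (fst (cf_ppair alpha k)) = (-1) ^ (S k) * prodth alpha k /\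
  INR (snd (cf_qpair alpha k)) * alpha - INR (snd (cf_ppair alpha k)) = (-1) ^ k * prodth alpha (S k).
Proof.
  induction k as [|k IH]; intros Hnz.
  - simpl. split; [lia|]. split; lra.
  - destruct IH as [Q1 [IH1 IH2]]. { intros i Hi. apply Hnz. lia. }
    assert (Ht : 0 < cf_rem alpha k < 1).
    { destruct (th_range alpha Ha k). specialize (Hnz k ltac:(lia)). lra. }
    destruct (a_val alpha k Ht) as [Av Ai].
    rewrite qpair_S, ppair_S. cbn [fst snd].
    split. { pose proof (Nat.mul_le_mono 1 _ 1 _ Ai Q1). lia. } split.
    + rewrite IH2. simpl. ring.
    + rewrite !plus_INR, !mult_INR, Av.
      replace ((1 / cf_rem alpha k - cf_rem alpha (S k)) * INR (snd (cf_qpair alpha k)) +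
         INR (fst (cf_qpair alpha k))) with
        ((1 / cf_rem alpha k - cf_rem alpha (S k)) * INR (snd (cf_qpair alpha k)) +
         INR (fst (cf_qpair alpha k))) by reflexivity.
      transitivity ((1 / cf_rem alpha k - cf_rem alpha (S k)) *
          (INR (snd (cf_qpair alpha k)) * alpha - INR (snd (cf_ppair alpha k))) +
          (INR (fst (cf_qpair alpha k)) * alpha - INR (fst (cf_ppair alpha k)))).
      { ring. }
      rewrite IH1, IH2. simpl. field. lra.
Qed.

Hypothesis Hirr : irrational alpha.

Lemma th_nz : forall n i, (i < n)%nat -> cf_rem alpha i <> 0.
Proof.
  induction n as [|n IH]; intros i Hi. lia.
  destruct (Nat.eq_dec i n) as [->|Hne]. 2:{ apply IH; lia. }
  intros H0.
  destruct (E_lemma n IH) as [Q [_ E2]].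
  simpl prodth in E2. rewrite H0, Rmult_0_r, Rmult_0_r in E2.
  apply (Hirr (Z.of_nat (snd (cf_ppair alpha n))) (Z.of_nat (snd (cf_qpair alpha n)))).
  - lia.
  - rewrite <- !INR_IZR_INZ. assert (0 < INR (snd (cf_qpair alpha n))).
    { apply lt_0_INR; lia. }
    set (q := INR (snd (cf_qpair alpha n))) in *. set (p := INR (snd (cf_ppair alpha n))) in *.
    clearbody q p. apply (Rmult_eq_reg_l q); [|lra]. field_simplify; lra.
Qed.

Lemma th_pos k : 0 < cf_rem alpha k < 1.
Proof. destruct (th_range alpha Ha k). pose proof (th_nz (S k) k ltac:(lia)). lra. Qed.

Lemma prodth_pos k : 0 < prodth alpha k.
Proof. induction k; simpl. lra. pose proof (th_pos k). apply Rmult_lt_0_compat; lra. Qed.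

Lemma prodth_le_alpha k : prodth alpha (S k) <= alpha.
Proof.
  induction k. simpl. lra.
  change (prodth alpha (S (S k))) with (prodth alpha (S k) * cf_rem alpha (S k)).
  pose proof (th_pos (S k)). pose proof (prodth_pos (S k)). nra.
Qed.

Lemma det_lemma k :
  INR (snd (cf_qpair alpha k)) * prodth alpha k + INR (fst (cf_qpair alpha k)) * prodth alpha (S k) = 1.
Proof.
  induction k. simpl. lra.
  rewrite qpair_S. cbn [fst snd].
  destruct (a_val alpha k (th_pos k)) as [Av _].
  rewrite plus_INR, mult_INR, Av.
  transitivity (INR (snd (cf_qpair alpha k)) * prodth alpha k + INR (fst (cf_qpair alpha k)) * prodth alpha (S k)); [|exact IHk].
  change (prodth alpha (S (S k))) with (prodth alpha (S k) * cf_rem alpha (S k)).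
  change (prodth alpha (S k)) with (prodth alpha k * cf_rem alpha k).
  pose proof (th_pos k). field. lra.
Qed.

End CF.

Section KB.
Variable alpha : R.
Hypothesis Ha : 0 < alpha < 1.
Hypothesis Hirr : irrational alpha.

Lemma qk_pos k : (1 <= cf_q alpha k)%nat.
Proof. unfold cf_q. apply (E_lemma alpha Ha k (th_nz alpha Ha Hirr k)). Qed.

Lemma qE k : exists p : Z,
  INR (cf_q alpha k) * alpha = IZR p + (-1) ^ k * prodth alpha (S k).
Proof.
  destruct (E_lemma alpha Ha k (th_nz alpha Ha Hirr k)) as [_ [_ E2]].
  exists (Z.of_nat (snd (cf_ppair alpha k))). rewrite <- INR_IZR_INZ. unfold cf_q. lra.
Qed.

Lemma KB1 k : dist_int (INR (cf_q alpha k) * alpha) <= prodth alpha (S k).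
Proof.
  destruct (qE k) as [p Hp]. rewrite Hp.
  eapply Rle_trans. apply (dist_int_le _ p).
  replace (IZR p + (-1) ^ k * prodth alpha (S k) - IZR p) with ((-1) ^ k * prodth alpha (S k)) by ring.
  rewrite Rabs_mult, pow_1_abs, Rabs_right. lra. pose proof (prodth_pos alpha Ha Hirr (S k)); lra.
Qed.

Lemma KB2 k : (2 <= cf_a alpha 1)%nat ->
  dist_int (INR (cf_q alpha k) * alpha) = prodth alpha (S k).
Proof.
  intros Ha1.
  assert (Hal : alpha <= /2).
  { simpl in Ha1. assert (Hz : (2 <= Int_part (1 / alpha))%Z).
    { destruct (Z_le_gt_dec 2 (Int_part (1 / alpha))); auto.
      assert (Z.to_nat (Int_part (1 / alpha)) <= 1)%nat by lia. lia. }
    destruct (Int_part_bounds (1 / alpha)). apply IZR_le in Hz.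
    assert (2 <= 1 / alpha) by lra.
    apply (Rmult_le_reg_l 2). lra. 
    replace (2 * /2) with 1 by field.
    apply (Rmult_le_compat_r alpha) in H1; [|lra].
    replace (1 / alpha * alpha) with 1 in H1 by (field; lra). lra. }
  destruct (qE k) as [p Hp]. rewrite Hp.
  pose proof (prodth_pos alpha Ha Hirr (S k)). pose proof (prodth_le_alpha alpha Ha Hirr k).
  assert (Rabs ((-1) ^ k * prodth alpha (S k)) = prodth alpha (S k)).
  { rewrite Rabs_mult, pow_1_abs, Rabs_right; lra. }
  rewrite dist_int_exact; lra.
Qed.

Lemma KB34 k :
  INR (cf_q alpha (S k)) * prodth alpha (S k) < 1 /\
  1 < INR (cf_q alpha (S k) + cf_q alpha k) * prodth alpha (S k).
Proof.
  pose proof (det_lemma alpha Ha Hirr (S k)) as D.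
  rewrite qpair_S in D at 2. cbn [fst] in D.
  change (snd (cf_qpair alpha (S k))) with (cf_q alpha (S k)) in D.
  change (snd (cf_qpair alpha k)) with (cf_q alpha k) in D.
  change (prodth alpha (S (S k))) with (prodth alpha (S k) * cf_rem alpha (S k)) in D.
  pose proof (prodth_pos alpha Ha Hirr (S k)). pose proof (th_pos alpha Ha Hirr (S k)).
  pose proof (qk_pos k). apply le_INR in H1. simpl INR in H1.
  rewrite plus_INR.
  assert (0 < prodth alpha (S k) * cf_rem alpha (S k) < prodth alpha (S k)).
  { split. apply Rmult_lt_0_compat; lra.
    rewrite <- (Rmult_1_r (prodth alpha (S k))) at 2. apply Rmult_lt_compat_l; lra. }
  split; nra.
Qed.

End KB.

Lemma fa_cons (s : nat -> bool) i L : factor_at s i (S L) = s i :: factor_at s (S i) L.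
Proof.
  unfold factor_at. simpl. rewrite Nat.add_0_r. f_equal.
  rewrite <- seq_shift, map_map. apply map_ext. intros; f_equal; lia.
Qed.

Lemma fa_length s i L : length (factor_at s i L) = L.
Proof. unfold factor_at. rewrite length_map, length_seq. reflexivity. Qed.

Lemma fa_skip s a : forall i L, (a <= L)%nat ->
  skipn a (factor_at s i L) = factor_at s (i + a) (L - a).
Proof.
  induction a as [|a IH]; intros i L H.
  - simpl. rewrite Nat.add_0_r, Nat.sub_0_r. reflexivity.
  - destruct L as [|L]. lia. rewrite fa_cons. simpl. rewrite IH by lia.
    f_equal. lia.
Qed.

Lemma fa_first s m : forall i L, (m <= L)%nat ->
  firstn m (factor_at s i L) = factor_at s i m.
Proof.
  induction m as [|m IH]; intros i L H.
  - reflexivity.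
  - destruct L as [|L]. lia. rewrite !fa_cons. simpl. rewrite IH by lia. reflexivity.
Qed.

Lemma fa_block s i m e j : (j < e)%nat ->
  firstn m (skipn (j * m) (factor_at s i (m * e))) = factor_at s (i + j * m) m.
Proof.
  intros Hj. rewrite fa_skip by nia. apply fa_first. nia.
Qed.

Lemma count_zo (l : list bool) : (count_zeros l + count_ones l = length l)%nat.
Proof.
  unfold count_zeros, count_ones. induction l as [|b l IH]; simpl. reflexivity.
  destruct b; simpl; lia.
Qed.

Lemma ones_cons b l : count_ones (b :: l) = ((if b then 1 else 0) + count_ones l)%nat.
Proof. unfold count_ones. destruct b; simpl; reflexivity. Qed.

Section Sturm.
Variable alpha rho : R.
Hypothesis Ha : 0 < alpha < 1.

Lemma letter_true n :
  Z.of_nat (if sturmian alpha rho true n then 1 else 0) =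
  (Int_part (rho + INR (S n) * alpha) - Int_part (rho + INR n * alpha))%Z.
Proof.
  unfold sturmian. rewrite S_INR.
  set (y := rho + INR n * alpha).
  replace (rho + (INR n + 1) * alpha) with (y + alpha) by (unfold y; ring).
  unfold frac. destruct (Int_part_bounds y) as [B1 B2].
  destruct (Rlt_dec (y - IZR (Int_part y)) (1 - alpha)) as [H|H]; simpl.
  - rewrite (Int_part_unique (y + alpha) (Int_part y)) by lra. lia.
  - rewrite (Int_part_unique (y + alpha) (Int_part y + 1)) by (rewrite plus_IZR; lra). lia.
Qed.

Lemma letter_false n :
  Z.of_nat (if sturmian alpha rho false n then 1 else 0) =
  (Int_part (- (rho + INR n * alpha)) - Int_part (- (rho + INR (S n) * alpha)))%Z.
Proof.
  unfold sturmian. rewrite S_INR.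
  set (y := rho + INR n * alpha).
  replace (- (rho + (INR n + 1) * alpha)) with (- y - alpha) by (unfold y; ring).
  unfold frac. destruct (Int_part_bounds y) as [B1 B2].
  set (f := Int_part y) in *.
  destruct (Rlt_dec 0 (y - IZR f)) as [H|H]; simpl.
  - rewrite (Int_part_unique (- y) (- f - 1)) by (rewrite minus_IZR, opp_IZR; lra).
    destruct (Rle_dec (y - IZR f) (1 - alpha)) as [H'|H']; simpl.
    + rewrite (Int_part_unique (- y - alpha) (- f - 1)) by (rewrite minus_IZR, opp_IZR; lra). lia.
    + rewrite (Int_part_unique (- y - alpha) (- f - 2)) by (rewrite minus_IZR, opp_IZR; lra). lia.
  - assert (y = IZR f) by lra.
    rewrite (Int_part_unique (- y) (- f)) by (rewrite opp_IZR; lra).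
    rewrite (Int_part_unique (- y - alpha) (- f - 1)) by (rewrite minus_IZR, opp_IZR; lra). lia.
Qed.

Lemma block_true m : forall i,
  Z.of_nat (count_ones (factor_at (sturmian alpha rho true) i m)) =
  (Int_part (rho + INR (i + m) * alpha) - Int_part (rho + INR i * alpha))%Z.
Proof.
  induction m as [|m IH]; intros i.
  - rewrite Nat.add_0_r. simpl. lia.
  - rewrite fa_cons, ones_cons, Nat2Z.inj_add, letter_true, IH.
    replace (S i + m)%nat with (i + S m)%nat by lia. lia.
Qed.

Lemma block_false m : forall i,
  Z.of_nat (count_ones (factor_at (sturmian alpha rho false) i m)) =
  (Int_part (- (rho + INR i * alpha)) - Int_part (- (rho + INR (i + m) * alpha)))%Z.
Proof.
  induction m as [|m IH]; intros i.
  - rewrite Nat.add_0_r. simpl. lia.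
  - rewrite fa_cons, ones_cons, Nat2Z.inj_add, letter_false, IH.
    replace (S i + m)%nat with (i + S m)%nat by lia. lia.
Qed.

End Sturm.

Lemma G_lemma (z0 D : R) (c : Z) (e : nat) :
  (forall j, (j < e)%nat ->
     (Int_part (z0 + INR (S j) * D) - Int_part (z0 + INR j * D))%Z = c) ->
  INR e * Rabs (D - IZR c) < 1.
Proof.
  intros H.
  assert (Hj : forall j, (j <= e)%nat -> Int_part (z0 + INR j * D) = (Int_part z0 + Z.of_nat j * c)%Z).
  { induction j as [|j IH]; intros Hj.
    - simpl. rewrite Rmult_0_l, Rplus_0_r. lia.
    - specialize (H j ltac:(lia)). rewrite IH in H by lia. lia. }
  specialize (Hj e (le_n e)).
  destruct (Int_part_bounds (z0 + INR e * D)) as [B1 B2].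
  destruct (Int_part_bounds z0) as [C1 C2].
  rewrite Hj, plus_IZR, mult_IZR, <- INR_IZR_INZ in B1, B2.
  pose proof (pos_INR e).
  rewrite <- (Rabs_right (INR e)) by lra. rewrite <- Rabs_mult.
  apply Rabs_def1; nra.
Qed.

Lemma G'_lemma (D : R) (c : Z) (e : nat) :
  INR e * Rabs (D - IZR c) < 1 ->
  exists rho, 0 <= rho < 1 /\
    forall j, (j <= e)%nat -> Int_part (rho + INR j * D) = (Z.of_nat j * c)%Z.
Proof.
  intros H. set (d := D - IZR c) in *. pose proof (pos_INR e).
  destruct (Rle_or_lt 0 d) as [Hd|Hd].
  - rewrite Rabs_right in H by lra. exists 0. split. lra.
    intros j Hj. apply Int_part_unique. rewrite mult_IZR, <- INR_IZR_INZ.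
    apply le_INR in Hj. pose proof (pos_INR j).
    replace D with (d + IZR c) by (unfold d; ring). nra.
  - rewrite Rabs_left in H by lra. exists (- INR e * d). split. nra.
    intros j Hj. apply Int_part_unique. rewrite mult_IZR, <- INR_IZR_INZ.
    apply le_INR in Hj. pose proof (pos_INR j).
    replace D with (d + IZR c) by (unfold d; ring). nra.
Qed.

Lemma final_ineq (e Q : nat) (d N : R) :
  INR e * d < 1 -> N <= d -> 1 < INR Q * N -> (e < Q)%nat.
Proof.
  intros H1 H2 H3. destruct (Nat.lt_ge_cases e Q) as [|HQ]; auto.
  apply le_INR in HQ. pose proof (pos_INR Q). exfalso.
  assert (0 < N). { destruct (Rle_or_lt N 0); auto. assert (INR Q * N <= 0) by nra. lra. }
  assert (INR Q * N <= INR Q * d) by (apply Rmult_le_compat_l; lra).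
  assert (INR Q * d <= INR e * d) by (apply Rmult_le_compat_r; lra). lra.
Qed.

Lemma ones_eq_equiv (u v : list bool) :
  length u = length v -> count_ones u = count_ones v -> abelian_equiv u v.
Proof.
  intros H1 H2. pose proof (count_zo u). pose proof (count_zo v). split; lia.
Qed.

Theorem lemma3p4 (alpha : R) (m k : nat) :
  0 < alpha < 1 -> irrational alpha -> (2 <= cf_a alpha 1)%nat -> (0 < m)%nat ->
  (dist_int (INR m * alpha) <= dist_int (INR (cf_q alpha k) * alpha) ->
     ab_ge alpha m (cf_q alpha (S k))) /\
  (dist_int (INR m * alpha) >= dist_int (INR (cf_q alpha k) * alpha) ->
     ab_lt alpha m (cf_q alpha (S k) + cf_q alpha k)).
Proof.
  intros Ha Hirr Ha1 Hm.
  pose proof (KB1 alpha Ha Hirr k) as K1.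
  pose proof (KB2 alpha Ha Hirr k Ha1) as K2.
  destruct (KB34 alpha Ha Hirr k) as [K3 K4].
  pose proof (prodth_pos alpha Ha Hirr (S k)) as PN.
  set (N := prodth alpha (S k)) in *.
  set (D := INR m * alpha).
  split.
  - intros H1. destruct (dist_int_attained D) as [c Hc].
    set (e := cf_q alpha (S k)) in *.
    assert (He : INR e * Rabs (D - IZR c) < 1).
    { rewrite Hc. pose proof (pos_INR e). fold D in H1. nra. }
    destruct (G'_lemma D c e He) as [rho [Hrho Hj]].
    set (s := sturmian alpha rho true).
    assert (Hb : forall j, (j < e)%nat ->
      Z.of_nat (count_ones (factor_at s (0 + j * m) m)) = c).
    { intros j Hjl. unfold s. rewrite block_true by exact Ha.
      replace (rho + INR (0 + j * m + m) * alpha) with (rho + INR (S j) * D)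
        by (unfold D; rewrite S_INR, !plus_INR, mult_INR; simpl; ring).
      replace (rho + INR (0 + j * m) * alpha) with (rho + INR j * D)
        by (unfold D; rewrite plus_INR, mult_INR; simpl; ring).
      rewrite !Hj by lia. lia. }
    exists (factor_at s 0 (m * e)), e. split; [|split; [split|]].
    + exists rho, true, 0%nat. split; [exact Hrho|]. rewrite fa_length. reflexivity.
    + apply fa_length.
    + intros j j' Hj1 Hj2. rewrite !fa_block by assumption.
      apply ones_eq_equiv. rewrite !fa_length; reflexivity.
      apply Nat2Z.inj. rewrite !Hb by assumption. reflexivity.
    + lia.
  - intros H2 w e Hin [Hlen Hab].
    destruct Hin as [rho [cl [i [Hrho Hw]]]]. rewrite Hlen in Hw.
    destruct e as [|e'].
    { pose proof (qk_pos alpha Ha Hirr k). lia. }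
    set (e := S e') in *.
    set (c0 := Z.of_nat (count_ones (factor_at (sturmian alpha rho cl) (i + 0 * m) m))).
    assert (Hb : forall j, (j < e)%nat ->
      Z.of_nat (count_ones (factor_at (sturmian alpha rho cl) (i + j * m) m)) = c0).
    { intros j Hj. unfold c0. f_equal.
      destruct (Hab j 0%nat Hj ltac:(unfold e; lia)) as [_ Ho].
      rewrite Hw in Ho. rewrite !fa_block in Ho by (unfold e; lia). exact Ho. }
    assert (HG : exists c : Z, INR e * Rabs (D - IZR c) < 1).
    { destruct cl.
      - exists c0. apply (G_lemma (rho + INR i * alpha)).
        intros j Hj. rewrite <- (Hb j Hj), block_true by exact Ha.
        replace (rho + INR (i + j * m + m) * alpha) with (rho + INR i * alpha + INR (S j) * D)
          by (unfold D; rewrite S_INR, !plus_INR, mult_INR; ring).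
        replace (rho + INR (i + j * m) * alpha) with (rho + INR i * alpha + INR j * D)
          by (unfold D; rewrite plus_INR, mult_INR; ring). reflexivity.
      - exists c0. replace (D - IZR c0) with (- (- D - IZR (- c0)))
          by (rewrite opp_IZR; ring). rewrite Rabs_Ropp.
        apply (G_lemma (- (rho + INR i * alpha))).
        intros j Hj. rewrite <- (Hb j Hj), block_false by exact Ha.
        replace (- (rho + INR (i + j * m + m) * alpha)) with (- (rho + INR i * alpha) + INR (S j) * - D)
          by (unfold D; rewrite S_INR, !plus_INR, mult_INR; ring).
        replace (- (rho + INR (i + j * m) * alpha)) with (- (rho + INR i * alpha) + INR j * - D)
          by (unfold D; rewrite plus_INR, mult_INR; ring). lia. }
    destruct HG as [c Hc].
    pose proof (dist_int_le D c).
    apply (final_ineq e _ (dist_int D) N).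
    + pose proof (pos_INR e). nra.
    + fold D in H2. lra.
    + exact K4.
Qed.
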